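(* Let $\mathcal{G}=(\mathcal{V},\mathcal{E})$ be a finite graph and let $$R(\mathcal{G})=\{x\in[0,1]^{\mathcal{V}}:\ \mathfrak{K}_{\mathcal{G}'}(x|_{\mathcal{G}'})>0\text{ for every induced subgraph }\mathcal{G}'\subseteq\mathcal{G}\}.$$ For a unit vector $u$ in the nonnegative orthant of $\mathbb{R}^{\mathcal{V}}$, let $$\rho(u)=\inf\{r\in[0,\infty):\ \min_{\mathcal{G}'\subseteq\mathcal{G}}\mathfrak{K}_{\mathcal{G}'}(ru|_{\mathcal{G}'})=0\},$$ the minimum over all induced subgraphs $\mathcal{G}'$. Then: (1) $\rho(u)=\min\{r\in[0,\infty):\mathfrak{K}_{\mathcal{G}}(ru)=0\}$ (in particular this minimum exists); (2) for $x\in[0,1]^{\mathcal{V}}\setminus\{0\}$, $x\in R(\mathcal{G})$ if and only if $|x|<\rho(x/|x|)$; (3) the map $u\mapsto\rho(u)$ is continuous on the set of unit vectors in the nonnegative orthant; (4) the map $\{y\in[0,1]^{\mathcal{V}}:|y|<1\}\to R(\mathcal{G})$, $y\mapsto\rho(y/|y|)\,y$ (interpreted as $0$ when $y=0$) is a homeomorphism.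
   Context: Graphs are finite, simple, undirected. A clique is a set of pairwise adjacent vertices (the empty set is a clique). An induced subgraph $\mathcal{G}'$ has vertex set $\mathcal{V}'\subseteq\mathcal{V}$ and all edges of $\mathcal{G}$ between vertices of $\mathcal{V}'$; $x|_{\mathcal{G}'}=(x_v)_{v\in\mathcal{V}'}$. $\mathfrak{K}_{\mathcal{G}}(x)=\sum_{\mathcal{K}\subseteq\mathcal{V}\text{ clique}}(-1)^{|\mathcal{K}|}\prod_{v\in\mathcal{K}}x_v$, the empty clique contributing $1$. $|\cdot|$ is the Euclidean norm. *)

(* Defs.v *)
From HB Require Import structures.
From mathcomp Require Import all_boot all_order all_algebra.
From mathcomp Require Import all_classical all_reals all_analysis.
Set Implicit Arguments.
Unset Strict Implicit.
Unset Printing Implicit Defensive.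
Import Order.TTheory GRing.Theory Num.Theory.
Import numFieldNormedType.Exports.
Local Open Scope classical_set_scope.
Local Open Scope ring_scope.

(* A finite simple graph on vertex set 'I_n is a symmetric irreflexive
   relation E : rel 'I_n.  Points of R^V are row vectors 'rV[R]_n. *)

Definition is_clique n (E : rel 'I_n) (K : {set 'I_n}) : bool :=
  [forall u in K, forall v in K, (u != v) ==> E u v].

(* Clique polynomial of the induced subgraph on S, evaluated at x|_S:
   sum over cliques K of G[S] (i.e. cliques K of G with K \subset S). *)
Definition cliquePoly (R : pzRingType) n (E : rel 'I_n) (S : {set 'I_n})
  (x : 'rV[R]_n) : R :=
  \sum_(K : {set 'I_n} | (K \subset S) && is_clique E K)
     (-1) ^+ #|K| * \prod_(v in K) x ord0 v.

Definition enorm (R : rcfType) n (x : 'rV[R]_n) : R :=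
  Num.sqrt (\sum_(i < n) x ord0 i ^+ 2).

Definition in_cube (R : realDomainType) n (x : 'rV[R]_n) : Prop :=
  forall i, 0 <= x ord0 i <= 1.

Definition unit_nonneg (R : rcfType) n : set 'rV[R]_n :=
  [set u : 'rV[R]_n | (forall i, 0 <= u ord0 i) /\ enorm u = 1].

Definition RG (R : realDomainType) n (E : rel 'I_n) : set 'rV[R]_n :=
  [set x : 'rV[R]_n | in_cube x /\ forall S : {set 'I_n}, 0 < cliquePoly E S x].

(* "min over induced subgraphs G' of K_{G'}(x|_{G'}) equals 0", written out:
   all values are >= 0 and one of them is 0. *)
Definition min_cliquePoly_eq0 (R : realDomainType) n (E : rel 'I_n)
  (x : 'rV[R]_n) : Prop :=
  (forall S : {set 'I_n}, 0 <= cliquePoly E S x) /\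
  (exists S : {set 'I_n}, cliquePoly E S x = 0).

Definition rho (R : realType) n (E : rel 'I_n) (u : 'rV[R]_n) : R :=
  inf [set r : R | 0 <= r /\ min_cliquePoly_eq0 E (r *: u)].

Definition open_ball_cube (R : rcfType) n : set 'rV[R]_n :=
  [set y : 'rV[R]_n | in_cube y /\ enorm y < 1].

Definition rho_map (R : realType) n (E : rel 'I_n) (y : 'rV[R]_n) : 'rV[R]_n :=
  if y == 0 then 0 else rho E ((enorm y)^-1 *: y) *: y.

(* Main.v *)
Require Import Defs.
From HB Require Import structures.
From mathcomp Require Import all_boot all_order all_algebra.
From mathcomp Require Import all_classical all_reals all_analysis.
From mathcomp Require Import ring lra.
Import Order.TTheory GRing.Theory Num.Theory.
Import numFieldNormedType.Exports.
Local Open Scope classical_set_scope.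
Local Open Scope ring_scope.
Section Comb.
Variables (R : realType) (n : nat) (E : rel 'I_n).
Hypotheses (Esym : symmetric E) (Eirr : irreflexive E).

Notation K := (@cliquePoly R n E).

Lemma clique_U1 w (j : {set 'I_n}) : w \notin j ->
  is_clique E (w |: j) = is_clique E j && [forall v in j, E w v].
Proof.
move=> wj; apply/idP/idP.
- move/forallP=> H; apply/andP; split.
  + apply/forallP=> a; apply/implyP=> aj; apply/forallP=> b; apply/implyP=> bj.
    have := H a; rewrite in_setU1 aj orbT /= => /forallP/(_ b).
    by rewrite in_setU1 bj orbT.
  + apply/forallP=> v; apply/implyP=> vj.
    have := H w; rewrite in_setU1 eqxx /= => /forallP/(_ v).
    rewrite in_setU1 vj orbT /= => /implyP; apply; apply/eqP=> wv; move: wj; by rewrite wv vj.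
- case/andP=> /forallP Hc /forallP Hw; apply/forallP=> a; apply/implyP.
  rewrite in_setU1 => /orP[/eqP->|aj]; apply/forallP=> b; apply/implyP;
    rewrite in_setU1 => /orP[/eqP->|bj]; apply/implyP => ne.
  + by rewrite eqxx in ne.
  + exact: (implyP (Hw b) bj).
  + by rewrite Esym; exact: (implyP (Hw a) aj).
  + exact: (implyP (implyP (forallP (implyP (Hc a) aj) b) bj) ne).
Qed.

Lemma K_del (S : {set 'I_n}) w (x : 'rV[R]_n) : w \in S ->
  K S x = K (S :\ w) x - x ord0 w * K [set v in S | E w v] x.
Proof.
move=> wS; rewrite /cliquePoly (bigID (fun K0 : {set 'I_n} => w \in K0)) /= addrC; congr (_ + _).
  apply: eq_bigl => K0; rewrite subsetD1; case: (w \in K0); by rewrite /= ?andbF ?andFb ?andbT.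
rewrite (reindex_onto (fun j => w |: j) (fun K0 => K0 :\ w)) /=; last first.
  by move=> K0 /andP[_ wK]; rewrite finset.setD1K.
rewrite mulr_sumr -sumrN; apply: eq_big => j.
  rewrite finset.setU11 andbT.
  have -> : ((w |: j) :\ w == j) = (w \notin j).
    apply/eqP/idP => [<-|wj]; first by rewrite finset.setD11.
    by rewrite finset.setU1K.
  case wj: (w \in j) => /=.
    rewrite andbF; apply/esym/negbTE; apply/negP=> /andP[/fintype.subsetP H _].
    by have := H w wj; rewrite inE Eirr andbF.
  rewrite andbT clique_U1 ?wj // finset.subUset finset.sub1set wS /=.
  apply/idP/idP.
  - case/andP=> jS /andP[cj /forallP Hw]; rewrite cj andbT.
    apply/fintype.subsetP=> v vj; rewrite inE (fintype.subsetP jS _ vj) /=; exact: (implyP (Hw v) vj).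
  - case/andP=> /fintype.subsetP jN cj; rewrite cj /=; apply/andP; split.
      by apply/fintype.subsetP=> v /jN; rewrite inE => /andP[].
    by apply/forallP=> v; apply/implyP=> /jN; rewrite inE => /andP[].
move=> /andP[_ /eqP Hj].
have wj : w \notin j by rewrite -Hj finset.setD11.
rewrite finset.cardsU1 wj finset.big_setU1 //= add1n exprS mulN1r.
by rewrite !mulNr mulrCA.
Qed.


Lemma K_set0 (x : 'rV[R]_n) : K finset.set0 x = 1.
Proof.
rewrite /cliquePoly (big_pred1 finset.set0); last first.
  move=> K0; rewrite finset.subset0; have [->|ne] := eqVneq K0 finset.set0; last exact: (esym (negbTE ne)). rewrite andTb; transitivity true; last by rewrite /= eqxx. by apply/forallP=> u; apply/implyP; rewrite finset.in_set0.
by rewrite finset.cards0 expr0 mul1r big_set0.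
Qed.

Lemma set_ind (P : {set 'I_n} -> Prop) :
  (forall S : {set 'I_n}, (forall S' : {set 'I_n}, (#|S'| < #|S|)%N -> P S') -> P S) -> forall S, P S.
Proof.
move=> H S; have [m] := ubnP #|S|; elim: m S => // m IH S Sm.
apply: H => S' S'S; apply: IH; exact: leq_trans S'S _.
Qed.

Lemma cardD1lt (S : {set 'I_n}) w : w \in S -> (#|S :\ w| < #|S|)%N.
Proof. by move=> wS; rewrite (cardsD1 w S) wS. Qed.

Lemma card_proper (A B : {set 'I_n}) : A \subset B -> A != B -> (#|A| < #|B|)%N.
Proof. by move=> AB AnB; apply: proper_card; rewrite finset.properEneq AnB AB. Qed.

Lemma N_sub (S : {set 'I_n}) w : [set v in S | E w v] \subset S :\ w.
Proof.
apply/fintype.subsetP=> v; rewrite !inE => /andP[vS Ewv]; rewrite vS andbT.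
by apply/eqP=> vw; move: Ewv; rewrite vw Eirr.
Qed.

Lemma K_zero (S : {set 'I_n}) (x : 'rV[R]_n) :
  (forall v, v \in S -> x ord0 v = 0) -> K S x = 1.
Proof.
elim/set_ind: S => S IH H.
have [->|[w wS]] := set_0Vmem S; first exact: K_set0.
rewrite (K_del _ _ _ wS) H // mul0r subr0 IH ?cardD1lt // => v; rewrite inE => /andP[_]; exact: H.
Qed.

Lemma K_mono (x : 'rV[R]_n) : (forall v, 0 <= x ord0 v) -> (forall T, 0 <= K T x) ->
  forall S S' : {set 'I_n}, S \subset S' -> K S' x <= K S x.
Proof.
move=> x0 K0 S S'; elim/set_ind: S' => S' IH SS'.
have [->|neq] := eqVneq S' S; first by [].
have [w /setDP [wS' wS]] : exists w, w \in S' :\: S.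
  apply/set0Pn; rewrite finset.setD_eq0; apply/negP=> S'S; move: neq.
  by rewrite finset.eqEsubset S'S SS'.
have sub : S \subset S' :\ w.
  by apply/fintype.subsetP=> v vS; rewrite !inE (fintype.subsetP SS' _ vS) andbT; apply/eqP=> vw; move: wS; rewrite -vw vS.
rewrite (K_del _ _ _ wS'); apply: (le_trans _ (IH _ (cardD1lt _ _ wS') sub)).
by rewrite lerBlDr lerDl; apply: mulr_ge0.
Qed.

Lemma K_ratio (x y : 'rV[R]_n) : (forall v, 0 <= y ord0 v <= x ord0 v) ->
  forall B : {set 'I_n}, (forall S : {set 'I_n}, S \subset B -> 0 < K S x) ->
  0 < K B y /\ forall A : {set 'I_n}, A \subset B -> K B x * K A y <= K B y * K A x.
Proof.
move=> xy; elim/set_ind => B IH Hx.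
have [->|[w0 w0B]] := set_0Vmem B.
  split; first by rewrite K_set0.
  by move=> A; rewrite finset.subset0 => /eqP->; rewrite mulrC.
have kBx := Hx B (subxx B).
have HB' w : w \in B -> 0 < K (B :\ w) y /\ forall A : {set 'I_n}, A \subset B :\ w -> K (B :\ w) x * K A y <= K (B :\ w) y * K A x.
  move=> wB; exact: (IH _ (cardD1lt _ _ wB) (fun S SB => Hx S (fintype.subset_trans SB (subsetDl _ _)))).
have step w : w \in B -> K B x * K (B :\ w) y <= K B y * K (B :\ w) x.
  move=> wB; set B' := B :\ w; set N := [set v in B | E w v].
  have B'B : B' \subset B by apply: subsetDl.
  have NB' : N \subset B' by apply: N_sub.
  have HN : 0 < K N y.
    by have [] := IH N (leq_ltn_trans (subset_leq_card NB') (cardD1lt _ _ wB))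
      (fun S SN => Hx S (fintype.subset_trans SN (fintype.subset_trans NB' B'B))).
  have kB'x := Hx B' B'B.
  have kNx := Hx N (fintype.subset_trans NB' B'B).
  have [yw0 ywx] := andP (xy w).
  rewrite (K_del _ _ x wB) (K_del _ _ y wB) -/B' -/N.
  have h1 := (HB' w wB).2 N NB'.
  have h2 : x ord0 w * (K B' x * K N y) <= x ord0 w * (K B' y * K N x) by apply: ler_wpM2l => //; exact: le_trans ywx.
  have h3 : y ord0 w * (K B' x * K N y) <= x ord0 w * (K B' x * K N y) by apply: ler_wpM2r => //; apply: mulr_ge0; apply: ltW.
  nra.
have kBy : 0 < K B y.
  have : 0 < K B y * K (B :\ w0) x.
    apply: lt_le_trans (step _ w0B); apply: mulr_gt0 => //; exact: (HB' _ w0B).1.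
  by rewrite pmulr_lgt0 // Hx // subsetDl.
split => // A AB.
have [->|AnB] := eqVneq A B; first by rewrite mulrC.
have [v /setDP [vB vA]] : exists v, v \in B :\: A.
  apply/set0Pn; rewrite finset.setD_eq0; apply/negP=> BA; move: AnB.
  by rewrite finset.eqEsubset BA AB.
have AB' : A \subset B :\ v.
  by apply/fintype.subsetP=> u uA; rewrite !inE (fintype.subsetP AB _ uA) andbT; apply/eqP=> uv; move: vA; rewrite -uv uA.
have h1 := (HB' v vB).2 A AB'.
have h2 := step v vB.
have kAx := Hx A AB.
have kB'x := Hx (B :\ v) (subsetDl _ _).
have kAy : 0 < K A y by have [] := IH A (card_proper _ _ AB AnB) (fun S SA => Hx S (fintype.subset_trans SA AB)).
have kB'y := (HB' v vB).1.
set a := K B x in h1 h2 kBx *; set b := K B y in h2 kBy *; set c := K (B :\ v) x in h1 h2 kB'x.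
set d := K (B :\ v) y in h1 h2 kB'y; set e := K A x in h1 kAx *; set f := K A y in h1 kAy *.
have : c * (a * f) <= c * (b * e).
  apply: (le_trans (y := a * (d * e))).
    by rewrite mulrCA; apply: ler_wpM2l; [exact: ltW|].
  by rewrite mulrA mulrA [c * b]mulrC; apply: ler_wpM2r => //; exact: ltW.
by rewrite ler_pM2l.
Qed.

End Comb.
Import Order.TTheory GRing.Theory Num.Theory.
Import numFieldNormedType.Exports.
Local Open Scope classical_set_scope.
Local Open Scope ring_scope.
Section Cont.
Variables (R : realType) (n : nat) (E : rel 'I_n).
Notation K := (@cliquePoly R n E).

Lemma K_cont (S : {set 'I_n}) : continuous (K S).
Proof.
have hadd : continuous (fun z : R * R => z.1 + z.2) by exact: add_continuous.
have hmul : continuous (fun z : R * R => z.1 * z.2) by exact: mul_continuous.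
rewrite /cliquePoly.
apply: (continuous_big hadd) => K0 _.
have hp : continuous (fun x : 'rV[R]_n => \prod_(v in K0) x ord0 v).
  apply: (continuous_big hmul) => v _; exact: coord_continuous.
move=> y; exact: (cvgM (cvg_cst _) (hp y)).
Qed.

Lemma near_pt (P : R -> Prop) a : (\forall r \near a, P r) ->
  exists2 e, 0 < e & forall r, `|a - r| < e -> P r.
Proof. by move=> /nbhs_normP [e /= e0 H]; exists e => // r ar; apply: H. Qed.
Arguments near_pt {P a}.

Lemma fS_cont (S : {set 'I_n}) (u : 'rV[R]_n) : continuous (fun r : R => K S (r *: u)).
Proof.
move=> r; apply: (@continuous_comp _ _ _ (fun r : R => r *: u) (K S)).
  by apply: continuousZr_tmp; exact: cvg_id.
exact: K_cont.
Qed.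

Hypotheses (Esym : symmetric E) (Eirr : irreflexive E).

Definition posb (x : 'rV[R]_n) := [forall S : {set 'I_n}, 0 < K S x].

Lemma posbP (x : 'rV[R]_n) : reflect (forall S, 0 < K S x) (posb x).
Proof. exact: forallP. Qed.

Lemma K_single v (x : 'rV[R]_n) : K [set v]%SET x = 1 - x ord0 v.
Proof.
rewrite (K_del _ _ _ Esym Eirr _ _ x (set11 v)) !(K_zero _ _ _ Esym Eirr) ?mulr1 // => w; rewrite !inE.
  by case/andP=> /eqP -> ; rewrite Eirr.
by case/andP=> /negPf ->.
Qed.

Lemma pos_lt1 (x : 'rV[R]_n) v : posb x -> x ord0 v < 1.
Proof. by move/posbP/(_ [set v]%SET); rewrite K_single subr_gt0. Qed.

Lemma downset (x y : 'rV[R]_n) : posb x -> (forall v, 0 <= y ord0 v <= x ord0 v) -> posb y.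
Proof.
move/posbP=> px xy; apply/posbP=> S.
by have [] := K_ratio _ _ _ Esym Eirr _ _ xy S (fun S' _ => px S').
Qed.

Lemma near_posb (x : 'rV[R]_n) : posb x -> \forall y \near x, posb y.
Proof.
move/posbP=> px.
have : \forall y \near x, forall S : {set 'I_n}, 0 < K S y.
  apply: (@filter_forall _ _ (fun S y => 0 < K S y) (nbhs x) (nbhs_filter x)) => S.
  have h : K S y @[y --> x] --> K S x by exact: K_cont.
  exact: (cvgr_gt _ h _ (px S)).
by apply: filterS => y /posbP.
Qed.

Arguments near_posb {x}.
Arguments downset {x y}.
Lemma near_comp (T : topologicalType) (f : T -> 'rV[R]_n) t (P : 'rV[R]_n -> Prop) :
  {for t, continuous f} -> (\forall y \near f t, P y) -> \forall s \near t, P (f s).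
Proof. by move=> hf hP; exact: hf _ hP. Qed.
Arguments near_comp {T f t P}.

Lemma near_neg S (x : 'rV[R]_n) : K S x < 0 -> \forall y \near x, K S y < 0.
Proof.
move=> h; have hc : K S y @[y --> x] --> K S x by exact: K_cont.
exact: (cvgr_lt _ hc _ h).
Qed.
Arguments near_neg {S x}.

Lemma ray_cont (u : 'rV[R]_n) r : {for r, continuous (fun s : R => s *: u)}.
Proof. by apply: continuousZr_tmp; exact: cvg_id. Qed.

Lemma dir_cont (r : R) (u : 'rV[R]_n) : {for u, continuous (fun v : 'rV[R]_n => r *: v)}.
Proof. exact: (@continuousZl_tmp _ _ _ id r u cvg_id). Qed.

Lemma char (u : 'rV[R]_n) : (forall v, 0 <= u ord0 v) -> (exists v, 0 < u ord0 v) ->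
  exists r0, [/\ 0 < r0, K [set: 'I_n]%SET (r0 *: u) = 0, (forall S, 0 <= K S (r0 *: u)) &
     forall r, 0 <= r -> (posb (r *: u) <-> r < r0)].
Proof.
move=> u0 [v uv].
pose Z := [set r : R | 0 <= r /\ ~~ posb (r *: u)].
have Zne : Z (u ord0 v)^-1.
  split; first by rewrite invr_ge0 ltW.
  apply/negP=> /posbP/(_ [set v]%SET); rewrite K_single mxE mulVf ?subrr ?ltxx //.
  by rewrite gt_eqF.
have Zlb : has_lbound Z by exists 0 => r [].
pose r0 := inf Z.
have r0ge : 0 <= r0 by apply: lb_le_inf; [exists (u ord0 v)^-1 | move=> r []].
have Ha : forall r, 0 <= r -> r < r0 -> posb (r *: u).
  move=> r r0' rr0; apply/negPn/negP=> np.
  by have := ge_inf Zlb (conj r0' np); rewrite leNgt rr0.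
have posr0_0 : posb (0 *: u).
  by apply/posbP=> S; rewrite scale0r (K_zero _ _ _ Esym Eirr) // => w _; rewrite mxE.
have r0gt : 0 < r0.
  have [e e0 He] := near_pt (near_comp (ray_cont u 0) (near_posb posr0_0)).
  apply: (lt_le_trans e0); apply: lb_le_inf; first by exists (u ord0 v)^-1.
  move=> r [r0' np]; rewrite leNgt; apply/negP=> re; move/negP: np; apply.
  by apply: He; rewrite sub0r normrN ger0_norm.
have Hc : forall S, 0 <= K S (r0 *: u).
  move=> S; rewrite leNgt; apply/negP=> neg.
  have [e e0 He] := near_pt (near_comp (ray_cont u r0) (near_neg neg)).
  pose r := r0 - Num.min e r0 / 2.
  have hm : 0 < Num.min e r0 by rewrite lt_min e0 r0gt.
  have hm2 : Num.min e r0 <= r0 by rewrite ge_min lexx orbT.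
  have hm3 : Num.min e r0 <= e by rewrite ge_min lexx.
  have rge : 0 <= r by rewrite /r subr_ge0; lra.
  have rlt : r < r0 by rewrite /r; lra.
  have : K S (r *: u) < 0 by apply: He; rewrite /r opprB addrC subrK ger0_norm; lra.
  by move/posbP: (Ha r rge rlt) => /(_ S) /lt_trans H /H; rewrite ltxx.
have [S HS] : exists S, K S (r0 *: u) <= 0.
  case: (boolP (posb (r0 *: u))) => [pr0|]; last first.
    by case/forallPn=> S; rewrite -leNgt => HS; exists S.
  have [e e0 He] := near_pt (near_comp (ray_cont u r0) (near_posb pr0)).
  have : r0 + e <= r0.
    apply: lb_le_inf; first by exists (u ord0 v)^-1.
    move=> r [r0' np]; rewrite leNgt; apply/negP=> re; move/negP: np; apply.
    have [rlt|rge] := ltP r r0; first exact: Ha.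
    by apply: He; rewrite distrC ger0_norm ?subr_ge0 //; lra.
  lra.
have KS0 : K S (r0 *: u) = 0 by apply/eqP; rewrite eq_le HS Hc.
have KG0 : K [set: 'I_n]%SET (r0 *: u) = 0.
  apply/eqP; rewrite eq_le Hc andbT -KS0.
  apply: (K_mono _ _ _ Esym Eirr) => //.
  by move=> w; rewrite mxE mulr_ge0.
exists r0; split => // r r0'; split; last exact: Ha.
move=> pr; rewrite ltNge; apply/negP=> rge.
have : posb (r0 *: u).
  apply: (downset pr) => w; rewrite !mxE mulr_ge0 //=.
  exact: ler_wpM2r.
by move/posbP/(_ [set: 'I_n]%SET); rewrite KG0 ltxx.
Qed.

End Cont.
Import Order.TTheory GRing.Theory Num.Theory.
Import numFieldNormedType.Exports.
Local Open Scope classical_set_scope.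
Local Open Scope ring_scope.
Arguments near_pt {R P a}.
Arguments near_comp {R n T f t P}.
Arguments near_posb {R n E x}.
Arguments near_neg {R n E S x}.
Arguments downset {R n E} Esym Eirr {x y}.
Arguments ray_cont {R n} u r.
Arguments dir_cont {R n} r u.
Arguments posb {R n} E x.

Section C.
Variables (R : realType) (n : nat).

Lemma within_contP (V : normedModType R) (A : set 'rV[R]_n) (f : 'rV[R]_n -> V) :
  (forall x, A x -> forall e, 0 < e -> \forall y \near x, A y -> `|f x - f y| < e) ->
  {within A, continuous f}.
Proof.
move=> H; rewrite continuous_subspace_in => x; rewrite inE => Ax.
apply/cvgrPdist_lt => e e0.
rewrite -(nbhs_subspace_in Ax) /within /=. exact: H Ax e e0.
Qed.

Lemma sumsq_ge (x : 'rV[R]_n) i : x ord0 i ^+ 2 <= \sum_(j < n) x ord0 j ^+ 2.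
Proof.
rewrite (bigD1 i) //= lerDl; apply: sumr_ge0 => j _; exact: sqr_ge0.
Qed.

Lemma enorm_ge0 (x : 'rV[R]_n) : 0 <= enorm x.
Proof. exact: sqrtr_ge0. Qed.

Lemma coord_le_enorm (x : 'rV[R]_n) i : x ord0 i <= enorm x.
Proof.
apply: le_trans (ler_norm _) _; rewrite -sqrtr_sqr; apply: ler_wsqrtr; exact: sumsq_ge.
Qed.

Lemma enorm0 : enorm (0 : 'rV[R]_n) = 0.
Proof. by rewrite /enorm big1 ?sqrtr0 // => i _; rewrite mxE expr0n. Qed.

Lemma enorm_gt0 (x : 'rV[R]_n) : x != 0 -> 0 < enorm x.
Proof.
move=> x0; have [i xi] : exists i, x ord0 i != 0.
  apply/existsP; apply: contraR x0 => /existsPn H; apply/eqP/rowP => i.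
  by rewrite mxE; apply/eqP; move: (H i); rewrite negbK.
rewrite /enorm sqrtr_gt0; apply: lt_le_trans (sumsq_ge x i).
by rewrite exprn_even_gt0.
Qed.

Lemma enorm_scale (c : R) (x : 'rV[R]_n) : 0 <= c -> enorm (c *: x) = c * enorm x.
Proof.
move=> c0; rewrite /enorm.
have -> : \sum_(i < n) (c *: x) ord0 i ^+ 2 = c ^+ 2 * \sum_(i < n) x ord0 i ^+ 2.
  by rewrite mulr_sumr; apply: eq_bigr => i _; rewrite mxE exprMn.
by rewrite sqrtrM ?sqr_ge0 // sqrtr_sqr ger0_norm.
Qed.

Lemma enorm_cont : continuous (@enorm R n).
Proof.
move=> x; apply: (@continuous_comp _ _ _ (fun y : 'rV[R]_n => \sum_(i < n) y ord0 i ^+ 2) Num.sqrt).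
  have hadd : continuous (fun z : R * R => z.1 + z.2) by exact: add_continuous.
  apply: (continuous_big hadd) => i _ y.
  apply: (@continuous_comp _ _ _ (fun y : 'rV[R]_n => y ord0 i) (fun t : R => t ^+ 2)).
    exact: coord_continuous.
  exact: exprn_continuous.
exact: sqrt_continuous.
Qed.

End C.
Import Order.TTheory GRing.Theory Num.Theory.
Import numFieldNormedType.Exports.
Local Open Scope classical_set_scope.
Local Open Scope ring_scope.
Arguments near_pt {R P a}.
Arguments near_comp {R n T f t P}.
Arguments near_posb {R n E x}.
Arguments near_neg {R n E S x}.
Arguments downset {R n E} Esym Eirr {x y}.
Arguments ray_cont {R n} u r.
Arguments dir_cont {R n} r u.
Arguments posb {R n} E x.
Arguments enorm_gt0 {R n x}.
Arguments enorm_scale {R n}.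
Arguments coord_le_enorm {R n}.
Arguments enorm0 {R n}.
Arguments enorm_ge0 {R n}.
Arguments enorm_cont {R n}.
Arguments within_contP {R n V A f}.
Arguments sumsq_ge {R n}.

Set Implicit Arguments.
Unset Strict Implicit.
Section D.
Variables (R : realType) (n : nat) (E : rel 'I_n).
Hypotheses (Esym : symmetric E) (Eirr : irreflexive E).
Notation K := (@cliquePoly R n E).

Lemma rho_char (u : 'rV[R]_n) : (forall v, 0 <= u ord0 v) -> (exists v, 0 < u ord0 v) ->
  [/\ 0 < rho E u, K [set: 'I_n]%SET (rho E u *: u) = 0, (forall S, 0 <= K S (rho E u *: u)) &
     forall r, 0 <= r -> (posb E (r *: u) <-> r < rho E u)].
Proof.
move=> u0 uex; have [r0 [h1 h2 h3 h4]] := @char R n E Esym Eirr u u0 uex.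
suff -> : rho E u = r0 by [].
rewrite /rho; set X := [set r : R | _].
have Xr0 : X r0 by split; [exact: ltW | split => //; exists [set: 'I_n]%SET].
apply/le_anti/andP; split.
  by apply: ge_inf => //; exists 0 => r [].
apply: lb_le_inf; first by exists r0.
move=> r [r0' [_ [S hS]]]; rewrite leNgt; apply/negP=> rlt.
by move/(posbP _ _ _)/(_ S): ((h4 r r0').2 rlt); rewrite hS ltxx.
Qed.

Lemma exists_pos (x : 'rV[R]_n) : (forall v, 0 <= x ord0 v) -> x != 0 -> exists v, 0 < x ord0 v.
Proof.
move=> x0 xn0; apply/existsP; apply: contraR xn0 => /existsPn H; apply/eqP/rowP => i.
by rewrite mxE; apply/eqP; rewrite eq_le x0 andbT leNgt H.
Qed.

Definition dir (x : 'rV[R]_n) := (enorm x)^-1 *: x.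

Lemma dir_unit (x : 'rV[R]_n) : (forall v, 0 <= x ord0 v) -> x != 0 -> unit_nonneg (dir x).
Proof.
move=> x0 xn0; have ex := enorm_gt0 xn0; split.
  by move=> v; rewrite mxE mulr_ge0 // invr_ge0 ltW.
by rewrite /dir enorm_scale ?invr_ge0 ?ltW // mulVf // gt_eqF.
Qed.

Lemma unit_pos (u : 'rV[R]_n) : unit_nonneg u -> (forall v, 0 <= u ord0 v) /\ exists v, 0 < u ord0 v.
Proof.
move=> [u0 u1]; split => //; apply: exists_pos => //.
by apply/eqP=> uz; move: u1; rewrite uz enorm0 => /eqP; rewrite eq_sym oner_eq0.
Qed.

Lemma dir_scale (c : R) (x : 'rV[R]_n) : 0 < c -> dir (c *: x) = dir x.
Proof.
by move=> c0; rewrite /dir enorm_scale ?ltW // scalerA invfM mulrAC mulVf ?gt_eqF // mul1r.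
Qed.

Lemma scale_dir (x : 'rV[R]_n) : x != 0 -> enorm x *: dir x = x.
Proof. by move=> xn0; rewrite /dir scalerA mulfV ?scale1r // gt_eqF // enorm_gt0. Qed.


Lemma near_forall_pos (P : pred {set 'I_n}) (x : 'rV[R]_n) :
  (forall T, P T -> 0 < K T x) -> \forall y \near x, forall T, P T -> 0 < K T y.
Proof.
move=> H.
apply: (@filter_forall _ _ (fun T y => P T -> 0 < K T y) (nbhs x) (nbhs_filter x)) => T.
case PT: (P T); last by apply: nearW.
have h : K T y @[y --> x] --> K T x by exact: K_cont.
by apply: filterS (cvgr_gt _ h _ (H T PT)) => y hy _.
Qed.

Lemma min_zero (x : 'rV[R]_n) : (forall S, 0 <= K S x) ->
  forall S : {set 'I_n}, K S x = 0 -> exists S' : {set 'I_n}, K S' x = 0 /\ forall T : {set 'I_n}, T \proper S' -> 0 < K T x.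
Proof.
move=> Hge; elim/set_ind => S IH KS.
case: (boolP [forall T : {set 'I_n}, (T \proper S) ==> (0 < K T x)]) => [/forallP H|/forallPn [T]].
  by exists S; split => // T TS; exact: (implyP (H T) TS).
rewrite negb_imply => /andP [TS nT].
have KT0 : K T x = 0 by apply/eqP; rewrite eq_le Hge andbT leNgt.
exact: (IH T (proper_card TS) KT0).
Qed.

Lemma rho_near (u : 'rV[R]_n) : unit_nonneg u -> forall e, 0 < e ->
  \forall u' \near u, unit_nonneg u' -> `|rho E u - rho E u'| < e.
Proof.
move=> Hu e e0; have [u0 uex] := unit_pos Hu.
have [r0gt KG Hge Hpos] := rho_char u0 uex; set r0 := rho E u in r0gt KG Hge Hpos *.
pose s := r0 - Num.min e r0 / 2.
have hm : 0 < Num.min e r0 by rewrite lt_min e0 r0gt.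
have hm2 : Num.min e r0 <= r0 by rewrite ge_min lexx orbT.
have hm3 : Num.min e r0 <= e by rewrite ge_min lexx.
have s0 : 0 <= s by rewrite /s subr_ge0; lra.
have slt : s < r0 by rewrite /s; lra.
have ps := (Hpos s s0).2 slt.
have L := near_comp (dir_cont s u) (near_posb ps).
have [S [KS0 Smin]] := min_zero Hge KG.
have [Se|[w wS]] := set_0Vmem S.
  by move: KS0; rewrite Se K_set0 => /eqP; rewrite oner_eq0.
set T' := S :\ w; set A := [set v in S | E w v].
have T'S : T' \proper S by apply: properD1.
have AT' : A \subset T' by apply: (N_sub _ _ Eirr).
have AS : A \proper S by apply: sub_proper_trans AT' T'S.
have kT'0 := Smin _ T'S; have kA0 := Smin _ AS.
have del0 := K_del _ _ _ Esym Eirr _ _ (r0 *: u) wS; rewrite -/T' -/A KS0 mxE in del0.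
have eqT : K T' (r0 *: u) = r0 * u ord0 w * K A (r0 *: u) by apply/eqP; rewrite -subr_eq0 -del0.
have uw : 0 < u ord0 w.
  have : 0 < r0 * u ord0 w * K A (r0 *: u) by rewrite -eqT.
  by rewrite pmulr_lgt0 // pmulr_rgt0.
have [e1 e10 He1] := near_pt (near_comp (ray_cont u r0) (@near_forall_pos (fun T => T \proper S) _ Smin)).
pose r := r0 + Num.min e1 e / 2.
have hn : 0 < Num.min e1 e by rewrite lt_min e0 e10.
have hn2 : Num.min e1 e <= e1 by rewrite ge_min lexx.
have hn3 : Num.min e1 e <= e by rewrite ge_min lexx orbT.
have rgt : r0 < r by rewrite /r; lra.
have posr : forall T : {set 'I_n}, T \proper S -> 0 < K T (r *: u).
  apply: He1; rewrite /r opprD addrA subrr sub0r normrN ger0_norm; lra.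
have xy : forall v, 0 <= (r0 *: u) ord0 v <= (r *: u) ord0 v.
  move=> v; rewrite !mxE; apply/andP; split; [apply: mulr_ge0; [exact: ltW | exact: u0] | apply: ler_wpM2r; [exact: u0 | exact: ltW]].
have [_ rat] := K_ratio _ _ _ Esym Eirr _ _ xy T' (fun S' S'T => posr S' (sub_proper_trans S'T T'S)).
have h1 := rat A AT'.
have kAr := posr _ AS.
have neg : K S (r *: u) < 0.
  rewrite (K_del _ _ _ Esym Eirr _ _ (r *: u) wS) -/T' -/A mxE.
  rewrite eqT in h1.
  have h2 : K T' (r *: u) <= r0 * u ord0 w * K A (r *: u).
    by rewrite -(ler_pM2r kA0) mulrAC.
  have h3 : r0 * u ord0 w * K A (r *: u) < r * u ord0 w * K A (r *: u).
    by rewrite ltr_pM2r // ltr_pM2r.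
  lra.
have U := near_comp (dir_cont r u) (near_neg neg).
apply: filterS2 L U => u' ps' neg' Hu'.
have [u0' uex'] := unit_pos Hu'.
have [rgt' _ _ Hpos'] := rho_char u0' uex'.
have sl : s < rho E u' by apply: (Hpos' s s0).1.
have rl : rho E u' <= r.
  rewrite leNgt; apply/negP=> rlt.
  have := (Hpos' r (le_trans (ltW r0gt) (ltW rgt))).2 rlt.
  by move/posbP/(_ S); rewrite ltNge ltW.
rewrite ltr_norml; apply/andP; split; rewrite /s /r in sl rl; lra.
Qed.

End D.
Import Order.TTheory GRing.Theory Num.Theory.
Import numFieldNormedType.Exports.
Local Open Scope classical_set_scope.
Local Open Scope ring_scope.
Arguments near_pt {R P a}.
Arguments near_comp {R n T f t P}.
Arguments near_posb {R n E x}.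
Arguments near_neg {R n E S x}.
Arguments downset {R n E} Esym Eirr {x y}.
Arguments ray_cont {R n} u r.
Arguments dir_cont {R n} r u.
Arguments posb {R n} E x.
Arguments enorm_gt0 {R n x}.
Arguments enorm_scale {R n}.
Arguments coord_le_enorm {R n}.
Arguments enorm0 {R n}.
Arguments enorm_ge0 {R n}.
Arguments enorm_cont {R n}.
Arguments within_contP {R n V A f}.
Arguments sumsq_ge {R n}.

Set Implicit Arguments.
Unset Strict Implicit.
Section E.
Variables (R : realType) (n : nat) (E : rel 'I_n).
Hypotheses (Esym : symmetric E) (Eirr : irreflexive E).
Notation K := (@cliquePoly R n E).

Lemma dirn_cont (y : 'rV[R]_n) : y != 0 -> {for y, continuous (@dir R n)}.
Proof.
move=> yn0; rewrite /dir.
have h0 : enorm t @[t --> y] --> enorm y by exact: enorm_cont.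
have ne : enorm y != 0 by rewrite gt_eqF // enorm_gt0.
have h1 := @cvgV _ _ (nbhs y) (nbhs_filter y) _ _ ne h0.
have h2 := cvgZ h1 (@cvg_id _ (nbhs y)).
exact (h2 (nbhs_filter y)).
Qed.

Lemma near_nz (y : 'rV[R]_n) : y != 0 -> \forall t \near y, t != 0.
Proof.
move=> yn0; have h : enorm t @[t --> y] --> enorm y by exact: enorm_cont.
apply: filterS (cvgr_gt _ h _ (enorm_gt0 yn0)) => t tp.
by apply/eqP=> t0; move: tp; rewrite t0 enorm0 ltxx.
Qed.

Lemma h_cvg (A : set 'rV[R]_n) (HA : forall y, A y -> forall v, 0 <= y ord0 v) (y : 'rV[R]_n) :
  A y -> y != 0 -> rho E (dir t) @[t --> within A (nbhs y)] --> rho E (dir y).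
Proof.
move=> Ay yn0; apply/cvgrPdist_lt => e e0.
have Hu := dir_unit (HA y Ay) yn0.
have N1 := near_comp (dirn_cont yn0) (rho_near Esym Eirr Hu e0).
apply: filterS2 N1 (near_nz yn0) => t H1 tn0 At.
exact: H1 (dir_unit (HA t At) tn0).
Qed.


Lemma rho_coord (u : 'rV[R]_n) : unit_nonneg u -> forall v, 0 <= rho E u * u ord0 v <= 1.
Proof.
move=> Hu v; have [u0 uex] := unit_pos Hu.
have [r0 _ Hge _] := rho_char Esym Eirr u0 uex.
apply/andP; split; first by apply: mulr_ge0; [exact: ltW|exact: u0].
by have := Hge [set v]%SET; rewrite (K_single _ _ _ Esym Eirr) mxE subr_ge0.
Qed.

Lemma rho_ub (u : 'rV[R]_n) : unit_nonneg u -> rho E u <= n%:R + 1.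
Proof.
move=> Hu; have [u0 uex] := unit_pos Hu.
have [r0 _ _ _] := rho_char Esym Eirr u0 uex.
have s1 : \sum_(i < n) u ord0 i ^+ 2 = 1.
  have e1 : Num.sqrt (\sum_(i < n) u ord0 i ^+ 2) = 1 := Hu.2.
  by rewrite -(sqr_sqrtr (sumr_ge0 _ (fun i _ => sqr_ge0 (u ord0 i)))) e1 expr1n.
have : rho E u ^+ 2 <= n%:R.
  have -> : rho E u ^+ 2 = \sum_(i < n) (rho E u * u ord0 i) ^+ 2.
    by rewrite -[LHS]mulr1 -s1 mulr_sumr; apply: eq_bigr => i _; rewrite exprMn.
  have -> : (n%:R : R) = \sum_(i < n) 1 by rewrite sumr_const card_ord.
  apply: ler_sum => i _; have /andP[a0 a1] := rho_coord Hu i.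
  by rewrite expr_le1.
have n0 : (0 : R) <= n%:R by [].
nra.
Qed.

Lemma rho_lb : exists2 d, 0 < d & forall u : 'rV[R]_n, unit_nonneg u -> d <= rho E u.
Proof.
pose ones := const_mx 1 : 'rV[R]_n.
have p0 : posb E (0 *: ones).
  by apply/posbP=> S; rewrite scale0r (K_zero _ _ _ Esym Eirr) // => w _; rewrite mxE.
have [e e0 He] := near_pt (near_comp (ray_cont ones 0) (near_posb p0)).
exists (e / 2); first by rewrite divr_gt0.
move=> u Hu; have [u0 uex] := unit_pos Hu.
have [r0 _ _ Hpos] := rho_char Esym Eirr u0 uex.
have e20 : 0 < e / 2 by rewrite divr_gt0.
apply: ltW; apply: (Hpos (e / 2) (ltW e20)).1.
apply: (downset Esym Eirr (He (e / 2) _)).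
  by rewrite sub0r normrN ger0_norm ?ltW ?divr_gt0 //; lra.
move=> v; rewrite !mxE; apply/andP; split.
  by apply: mulr_ge0; [exact: ltW|exact: u0].
apply: ler_wpM2l; first exact: ltW.
by have := coord_le_enorm u v; rewrite Hu.2.
Qed.

End E.
Import Order.TTheory GRing.Theory Num.Theory.
Import numFieldNormedType.Exports.
Local Open Scope classical_set_scope.
Local Open Scope ring_scope.
Arguments near_pt {R P a}.
Arguments near_comp {R n T f t P}.
Arguments near_posb {R n E x}.
Arguments near_neg {R n E S x}.
Arguments downset {R n E} Esym Eirr {x y}.
Arguments ray_cont {R n} u r.
Arguments dir_cont {R n} r u.
Arguments posb {R n} E x.
Arguments enorm_gt0 {R n x}.
Arguments enorm_scale {R n}.
Arguments coord_le_enorm {R n}.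
Arguments enorm0 {R n}.
Arguments enorm_ge0 {R n}.
Arguments enorm_cont {R n}.
Arguments within_contP {R n V A f}.
Arguments sumsq_ge {R n}.

Unset Implicit Arguments.
Set Strict Implicit.

Theorem lemma4p3 (R : realType) (n : nat) (E : rel 'I_n)
  (Esym : symmetric E) (Eirr : irreflexive E) :
  (* (1) *)
  (forall u : 'rV[R]_n, @unit_nonneg R n u ->
     exists r0 : R,
       [/\ 0 <= r0, cliquePoly E [set: 'I_n]%SET (r0 *: u) = 0,
           (forall r : R, 0 <= r -> cliquePoly E [set: 'I_n]%SET (r *: u) = 0 -> r0 <= r)
         & rho E u = r0]) /\
  (* (2) *)
  (forall x : 'rV[R]_n, in_cube x -> x != 0 ->
     (RG E x <-> enorm x < rho E ((enorm x)^-1 *: x))) /\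
  (* (3) *)
  {within @unit_nonneg R n, continuous (rho E)} /\
  (* (4) *)
  (exists g : 'rV[R]_n -> 'rV[R]_n,
     [/\ (forall y, @open_ball_cube R n y -> RG E (rho_map E y)),
         (forall x, RG E x -> @open_ball_cube R n (g x)),
         (forall y, @open_ball_cube R n y -> g (rho_map E y) = y),
         (forall x, RG E x -> rho_map E (g x) = x) &
       {within @open_ball_cube R n, continuous (rho_map E)} /\
       {within RG E, continuous g}]).
Proof.
have cube0 : forall x : 'rV[R]_n, in_cube x -> forall v, 0 <= x ord0 v.
  by move=> x cx v; have /andP[] := cx v.
have part2 : forall x : 'rV[R]_n, in_cube x -> x != 0 ->
     (RG E x <-> enorm x < rho E (dir x)).
  move=> x cx xn0; have x0 := cube0 x cx.
  have Hu := dir_unit x0 xn0; have [u0 uex] := unit_pos Hu.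
  have [_ _ _ Hpos] := rho_char Esym Eirr u0 uex.
  split.
    move=> [_ Hp]; apply: (Hpos _ (enorm_ge0 x)).1; rewrite scale_dir //; exact/posbP.
  move=> lt; split => //; apply/posbP; have := (Hpos _ (enorm_ge0 x)).2 lt.
  by rewrite scale_dir.
split.
  move=> u Hu; have [u0 uex] := unit_pos Hu.
  have [h1 h2 h3 h4] := rho_char Esym Eirr u0 uex.
  exists (rho E u); split => //; first exact: ltW.
  move=> r r0 Kr; rewrite leNgt; apply/negP => rlt.
  by have := (h4 r r0).2 rlt; move/posbP/(_ [set: 'I_n]%SET); rewrite Kr ltxx.
split; first exact: part2.
split.
  apply: within_contP => u Hu e e0; exact: (rho_near Esym Eirr Hu e0).
have RG0 : RG E (0 : 'rV[R]_n).
  split; first by move=> i; rewrite mxE lexx ler01.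
  by move=> S; rewrite (K_zero _ _ _ Esym Eirr) // => w _; rewrite mxE.
have RGc : forall x : 'rV[R]_n, RG E x -> forall v, 0 <= x ord0 v by move=> x [cx _]; exact: cube0 x cx.
have Bc : forall y, @open_ball_cube R n y -> forall v, 0 <= y ord0 v by move=> y [cy _]; exact: cube0 y cy.
have rhoP : forall y : 'rV[R]_n, (forall v, 0 <= y ord0 v) -> y != 0 ->
    [/\ 0 < rho E (dir y), unit_nonneg (dir y) &
        forall r, 0 <= r -> (posb E (r *: dir y) <-> r < rho E (dir y))].
  move=> y y0 yn0; have Hu := dir_unit y0 yn0; have [u0 uex] := unit_pos Hu.
  by have [h1 _ _ h4] := rho_char Esym Eirr u0 uex.
pose g := fun x : 'rV[R]_n => if x == 0 then 0 else (rho E (dir x))^-1 *: x.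
have rmE : forall y : 'rV[R]_n, y != 0 -> rho_map E y = rho E (dir y) *: y.
  by move=> y yn0; rewrite /rho_map (negbTE yn0).
have gE : forall y : 'rV[R]_n, y != 0 -> g y = (rho E (dir y))^-1 *: y.
  by move=> y yn0; rewrite /g (negbTE yn0).
have rm0 : rho_map E (0 : 'rV[R]_n) = 0 by rewrite /rho_map eqxx.
have g0 : g 0 = 0 by rewrite /g eqxx.
exists g; split.
- move=> y [cy ny]; have [->|yn0] := eqVneq y 0; first by rewrite rm0.
  have [rp Hu Hpos] := rhoP y (cube0 y cy) yn0.
  have ey := enorm_gt0 yn0.
  have pm : posb E (rho_map E y).
    have -> : rho_map E y = (rho E (dir y) * enorm y) *: dir y by rewrite rmE // -scalerA scale_dir.
    apply: (Hpos _ _).2; first by rewrite mulr_ge0 ?ltW.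
    by rewrite gtr_pMr.
  split; last exact/posbP.
  move=> v; rewrite (ltW (@pos_lt1 R n E Esym Eirr _ v pm)) andbT rmE // mxE.
  by apply: mulr_ge0; [exact: ltW | exact: cube0 y cy v].
- move=> x Rx; have [->|xn0] := eqVneq x 0.
    by rewrite g0; split; [move=> i; rewrite mxE lexx ler01 | rewrite enorm0 ltr01].
  have [cx _] := Rx.
  have [rp Hu Hpos] := rhoP x (cube0 x cx) xn0.
  have lt : enorm x < rho E (dir x) by apply/(part2 x cx xn0).
  have ri : 0 <= (rho E (dir x))^-1 by rewrite invr_ge0 ltW.
  rewrite gE //; split.
    move=> v; rewrite mxE mulr_ge0 ?cube0 //=.
    apply: le_trans (_ : (rho E (dir x))^-1 * enorm x <= 1).
      by apply: ler_wpM2l => //; exact: coord_le_enorm.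
    by rewrite ler_pdivrMl // mulr1 ltW.
  by rewrite enorm_scale // ltr_pdivrMl // mulr1.
- move=> y [cy ny]; have [->|yn0] := eqVneq y 0; first by rewrite rm0 g0.
  have [rp Hu Hpos] := rhoP y (cube0 y cy) yn0.
  have mn0 : rho E (dir y) *: y != 0 by rewrite scaler_eq0 negb_or gt_eqF.
  by rewrite rmE // gE // dir_scale // scalerA mulVf ?gt_eqF // scale1r.
- move=> x Rx; have [->|xn0] := eqVneq x 0; first by rewrite g0 rm0.
  have [cx _] := Rx.
  have [rp Hu Hpos] := rhoP x (cube0 x cx) xn0.
  have ri : 0 < (rho E (dir x))^-1 by rewrite invr_gt0.
  have mn0 : (rho E (dir x))^-1 *: x != 0 by rewrite scaler_eq0 negb_or gt_eqF.
  by rewrite gE // rmE // dir_scale // scalerA mulfV ?gt_eqF // scale1r.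
have hid0 : t @[t --> (0 : 'rV[R]_n)] --> (0 : 'rV[R]_n) by exact: cvg_id.
split.
- apply: within_contP => y Ay e e0.
  have [->|yn0] := eqVneq y 0.
    have n2 : (0 : R) < n%:R + 2 by have n0 : (0 : R) <= n%:R by []; lra.
    have d0 : 0 < e / (n%:R + 2) by rewrite divr_gt0.
    apply: filterS ((cvgrPdist_lt _ _).1 hid0 _ d0) => t ht At.
    rewrite rm0; have [->|tn0] := eqVneq t 0; first by rewrite rm0 subrr normr0.
    have [rp Hu _] := rhoP t (Bc t At) tn0.
    have rub := rho_ub Esym Eirr Hu.
    rewrite rmE // sub0r normrN normrZ ger0_norm ?ltW //.
    rewrite sub0r normrN in ht.
    have nt0 : 0 <= `|t| by [].
    rewrite ltr_pdivlMr // in ht.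
    have n0 : (0 : R) <= n%:R by [].
    nra.
  have hh := h_cvg Esym Eirr Bc Ay yn0.
  have hid : t @[t --> within (@open_ball_cube R n) (nbhs y)] --> y by exact: cvg_within.
  have W := (cvgrPdist_lt _ _).1 (cvgZ hh hid) e e0.
  have W' : \forall t \near y, open_ball_cube t ->
      `|rho E (dir y) *: y - rho E (dir t) *: t| < e.
    by apply: W; apply: within_filter; exact: nbhs_filter.
  apply: filterS2 W' (near_nz yn0) => t Wt tn0 At.
  by rewrite rmE // rmE //; exact: Wt At.
- apply: within_contP => y Ay e e0.
  have [d d0 Hd] := @rho_lb R n E Esym Eirr.
  have [->|yn0] := eqVneq y 0.
    have d1 : 0 < e * d by rewrite mulr_gt0.
    apply: filterS ((cvgrPdist_lt _ _).1 hid0 _ d1) => t ht At.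
    rewrite g0; have [->|tn0] := eqVneq t 0; first by rewrite g0 subrr normr0.
    have [rp Hu _] := rhoP t (RGc t At) tn0.
    have dl := Hd _ Hu.
    rewrite gE // sub0r normrN normrZ ger0_norm ?invr_ge0 ?ltW //.
    rewrite sub0r normrN in ht.
    rewrite mulrC ltr_pdivrMr //.
    apply: lt_le_trans ht _; rewrite ler_pM2l //.
  have [rp _ _] := rhoP y (RGc y Ay) yn0.
  have hh := h_cvg Esym Eirr RGc Ay yn0.
  have ne : rho E (dir y) != 0 by rewrite gt_eqF.
  have hv := @cvgV _ _ (within (RG E) (nbhs y)) (within_filter _ (nbhs_filter y)) _ _ ne hh.
  have hid : t @[t --> within (RG E) (nbhs y)] --> y by exact: cvg_within.
  have W := (cvgrPdist_lt _ _).1 (cvgZ hv hid) e e0.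
  have W' : \forall t \near y, RG E t ->
      `|(rho E (dir y))^-1 *: y - (rho E (dir t))^-1 *: t| < e.
    by apply: W; apply: within_filter; exact: nbhs_filter.
  apply: filterS2 W' (near_nz yn0) => t Wt tn0 At.
  by rewrite gE // gE //; exact: Wt At.
Qed.
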